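(* Let $n\ge 3$ and let $X=\mathrm{C}_n$ be the cycle graph on $n$ vertices. Then $|\mathrm{Fix}(\mathbf{F}^\uparrow)|=2+\mathrm{Luc}_{3n}=2+(2+\sqrt5)^n+(2-\sqrt5)^n$, where $\mathrm{Luc}_m$ is the $m$-th Lucas number ($\mathrm{Luc}_0=2$, $\mathrm{Luc}_1=1$, $\mathrm{Luc}_m=\mathrm{Luc}_{m-1}+\mathrm{Luc}_{m-2}$).
   Context: For a finite simple graph $X$ with vertices $1,\dots,n$, $d(v)$ is the degree of $v$ and $n[v]$ the closed neighborhood of $v$. An extended vertex state is $s_v=(x_v,k_v)\in\{0,1\}\times\{1,\dots,d(v)+1\}$; $\mathcal{S}$ is the product of these sets. Let $\sigma(x[v])=|\{u\in n[v]:x_u=1\}|$. The increasing vertex function maps $(x_v,k_v)$ to $(x_v',k_v')$ with $x_v'=1$ iff $\sigma(x[v])\ge k_v$ (else $0$), and $k_v'=k_v+1$ if $x_v=0$ and $\sigma(x[v])\ge k_v$, else $k_v'=k_v$. $\mathbf{F}^\uparrow:\mathcal{S}\to\mathcal{S}$ applies this vertex function at all vertices simultaneously, and $\mathrm{Fix}(\mathbf{F}^\uparrow)$ is its set of fixed points (equivalently: states with, for every $v$, either $x_v=0$ and $\sigma(x[v])<k_v$, or $x_v=1$ and $\sigma(x[v])\ge k_v$). *)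

(* Defs.v *)
From mathcomp Require Import all_boot all_order all_algebra.
Set Implicit Arguments. Unset Strict Implicit. Unset Printing Implicit Defensive.

Definition simple_graph (T : finType) (e : rel T) : Prop :=
  symmetric e /\ irreflexive e.

Definition deg (T : finType) (e : rel T) (v : T) : nat := #|[set u | e v u]|.

Definition cnbhd (T : finType) (e : rel T) (v : T) : {set T} :=
  v |: [set u | e v u].

(* An (encoded) extended state: for each vertex a pair (x_v, k_v); the
   threshold k_v is stored as a natural number below #|T|+1 (enough room,
   since d(v)+1 <= #|T|); the admissible states (the product set S) are
   those with 1 <= k_v <= d(v)+1. *)
Definition state (T : finType) := {ffun T -> bool * 'I_(#|T|.+1)}.

Definition xs (T : finType) (s : state T) (v : T) : bool := (s v).1.
Definition ks (T : finType) (s : state T) (v : T) : nat := (s v).2.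

Definition admissible (T : finType) (e : rel T) (s : state T) : bool :=
  [forall v, (1 <= ks s v) && (ks s v <= deg e v + 1)].

Definition sigma (T : finType) (e : rel T) (s : state T) (v : T) : nat :=
  #|[set u in cnbhd e v | xs s u]|.

Definition fup_x (T : finType) (e : rel T) (s : state T) (v : T) : bool :=
  ks s v <= sigma e s v.
Definition fup_k (T : finType) (e : rel T) (s : state T) (v : T) : nat :=
  if ~~ xs s v && (ks s v <= sigma e s v) then (ks s v).+1 else ks s v.

Definition is_fixed (T : finType) (e : rel T) (s : state T) : bool :=
  [forall v, (fup_x e s v == xs s v) && (fup_k e s v == ks s v)].

Definition Fix_up (T : finType) (e : rel T) : {set state T} :=
  [set s | admissible e s && is_fixed e s].

Definition cycle_rel (n : nat) : rel 'I_n :=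
  fun i j => (i != j) && ((j == (i.+1 %% n) :> nat) || (i == (j.+1 %% n) :> nat)).

Fixpoint lucas (m : nat) : nat :=
  match m with
  | 0 => 2
  | 1 => 1
  | (m'.+1 as p).+1 => lucas p + lucas m'
  end.

(* Main.v *)
Require Import Defs.
From mathcomp Require Import all_boot all_order all_algebra.
From mathcomp Require Import zify ring lra.
Import GRing.Theory Num.Theory.
Set Implicit Arguments. Unset Strict Implicit. Unset Printing Implicit Defensive.

Definition w (a b c : bool) : nat := if b then a + b + c else 3 - (a + b + c).

Fixpoint iw (a b : bool) (l : seq bool) : nat :=
  if l is c :: l' then w a b c * iw b c l' else 1.

Lemma iw_prod a b l :
  iw a b l = \prod_(i < size l)
     w (nth false [:: a, b & l] i) (nth false [:: a, b & l] i.+1) (nth false [:: a, b & l] i.+2).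
Proof.
elim: l a b => [|c l IH] a b /=; first by rewrite big_ord0.
by rewrite big_ord_recl IH.
Qed.

Fixpoint allb (m : nat) : seq (seq bool) :=
  if m is m'.+1 then map (cons false) (allb m') ++ map (cons true) (allb m')
  else [:: [::]].

Lemma mem_allb m l : (l \in allb m) = (size l == m).
Proof.
have Hin b (s : seq (seq bool)) l' : (b :: l' \in map (cons b) s) = (l' \in s).
  by rewrite mem_map // => ? ? [].
have Hout b b' (s : seq (seq bool)) l' : b != b' -> (b :: l' \in map (cons b') s) = false.
  by move=> ne; apply/mapP => -[? _ [e _]]; rewrite e eqxx in ne.
elim: m l => [|m IH] l.
  by case: l => [|b l] //=; rewrite inE.
rewrite /= mem_cat; case: l => [|b l] /=.
  by apply/negbTE/norP; split; apply/mapP => -[? _].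
by case: b; rewrite Hin Hout ?orbF // IH.
Qed.

Lemma uniq_allb m : uniq (allb m).
Proof.
elim: m => [|m IH] //=; rewrite cat_uniq !map_inj_uniq //; try by move=> ? ? [].
rewrite IH /= andbT; apply/hasPn => l /mapP [l' _ ->].
by apply/mapP => -[? _].
Qed.

Fixpoint qf (m : nat) (a b c d : bool) : nat :=
  if m is m'.+1 then w a b false * qf m' b false c d + w a b true * qf m' b true c d
  else w a b c * (w b c d * 1).

Definition T m := qf m false false false false + qf m false true false true +
  qf m true false true false + qf m true true true true.

Lemma Qf_qf m a b c d : \sum_(l <- allb m) iw a b (l ++ [:: c; d]) = qf m a b c d.
Proof.
elim: m a b => [|m IH] a b; first by rewrite big_seq1.
by rewrite /= big_cat !big_map /= -!big_distrr /= !IH.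
Qed.

Definition cyc (l : seq bool) : nat :=
  if l is a :: b :: r then iw a b (r ++ [:: a; b]) else 0.

Lemma sum_cyc m : \sum_(l <- allb m.+2) cyc l = T m.
Proof.
by rewrite /= !big_cat !big_map /= !big_cat !big_map /= !Qf_qf /T !addnA.
Qed.
Lemma modS_val n v : v < n -> v.+1 %% n = if v.+1 == n then 0 else v.+1.
Proof.
move=> hv; case: eqP => [->|ne]; first by rewrite modnn.
by rewrite modn_small //; lia.
Qed.

Lemma modP_val n v : v < n -> (v + n.-1) %% n = if v == 0 then n.-1 else v.-1.
Proof.
move=> hv; case: eqP => [->|ne]; first by rewrite add0n modn_small //; lia.
have -> : v + n.-1 = v.-1 + n by lia.
by rewrite modnDr modn_small //; lia.
Qed.

Lemma nat_cyc n u v : 2 < n -> u < n -> v < n ->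
  ((v != u) && ((u == v.+1 %% n) || (v == u.+1 %% n))) =
  ((u == v.+1 %% n) || (u == (v + n.-1) %% n)).
Proof.
move=> hn hu hv; rewrite !modS_val // modP_val //.
repeat (case: ifP => /eqP ?); repeat (case: eqP => ?); simpl; try done; exfalso; lia.
Qed.

Section Cyc.
Variable n : nat.
Hypothesis hn : 2 < n.
Lemma n0 : 0 < n. Proof. lia. Qed.

Definition succ (v : 'I_n) : 'I_n := Ordinal (ltn_pmod v.+1 n0).
Definition pred (v : 'I_n) : 'I_n := Ordinal (ltn_pmod (v + n.-1) n0).

Lemma nbr v : [set u | @cycle_rel n v u] = [set succ v; pred v].
Proof.
apply/setP => u; rewrite !inE /cycle_rel -!val_eqE /=.
exact: nat_cyc.
Qed.

Lemma succ_pred_ne v : succ v != pred v.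
Proof.
rewrite -val_eqE /= modS_val // modP_val //.
repeat (case: ifP => /eqP ?); apply/eqP; lia.
Qed.

Lemma v_notin v : v \notin [set succ v; pred v].
Proof.
rewrite !inE -!val_eqE /= modS_val // modP_val //.
repeat (case: ifP => /eqP ?); apply/norP; split; apply/eqP; lia.
Qed.

Lemma deg_cyc v : deg (@cycle_rel n) v = 2.
Proof. by rewrite /deg nbr cards2 succ_pred_ne. Qed.

Lemma sigma_cyc s v :
  sigma (@cycle_rel n) s v = xs s (pred v) + xs s v + xs s (succ v).
Proof.
rewrite /sigma -sum1_card (eq_bigl (fun u => (u \in cnbhd (@cycle_rel n) v) && xs s u)); last by move=> u; rewrite inE.
rewrite big_mkcondr /= /cnbhd nbr.
rewrite big_setU1 ?v_notin //= big_setU1 ?inE ?succ_pred_ne //= big_set1.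
by case: (xs s v); case: (xs s (pred v)); case: (xs s (succ v)).
Qed.

Lemma pred_succ v : pred (succ v) = v.
Proof.
apply/val_inj => /=; have hv := ltn_ord v.
rewrite modS_val //; case: ifP => /eqP h.
  by rewrite add0n modn_small; lia.
by rewrite (@modP_val n v.+1) /=; lia.
Qed.

Lemma succ_inj : injective succ.
Proof. by move=> u v /(congr1 pred); rewrite !pred_succ. Qed.

End Cyc.

Lemma count_j M (a b c : bool) : 3 < M ->
  \sum_(j < M) ((1 <= j <= 3) && ((j <= a + b + c) == b) : nat) = w a b c.
Proof.
move=> hM; rewrite -(big_mkord xpredT (fun j => ((1 <= j <= 3) && ((j <= a + b + c) == b) : nat))).
rewrite (@big_cat_nat _ _ _ 4 0 M _ _ (leq0n 4) hM).
rewrite [\sum_(4 <= _ < M) _]big_nat_cond [\sum_(4 <= _ < M | _) _]big1 ?addn0; last first.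
  move=> j /andP[/andP[h _] _].
  have -> : (j <= 3) = false by apply/negbTE; rewrite -ltnNge.
  by rewrite andbF.
by case: a; case: b; case: c; rewrite /w !big_nat_recl // big_geq.
Qed.

Lemma nthy n l j : 2 < n -> size l = n -> j < n.+2 ->
  nth false (l ++ [:: nth false l 0; nth false l 1]) j = nth false l (j %% n).
Proof.
move=> hn hs hj; rewrite nth_cat hs; case: ifP => hjn.
  by rewrite modn_small.
have [->|->] : j = n \/ j = n.+1 by lia.
  by rewrite subnn modnn.
by rewrite subSnn -[n.+1]addn1 modnDl modn_small //; lia.
Qed.

Lemma cyc_prod n l : 2 < n -> size l = n ->
  cyc l = \prod_(i < n) w (nth false l (i %% n)) (nth false l (i.+1 %% n)) (nth false l (i.+2 %% n)).
Proof.
move=> hn; case: l => [|a [|b r]] /= hs; try lia.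
rewrite iw_prod.
have hs' : size (r ++ [:: a; b]) = n by rewrite size_cat /= addn2.
rewrite hs'.
apply: eq_bigr => i _; have hi := ltn_ord i.
have E : forall j, j < n.+2 -> nth false [:: a, b & r ++ [:: a; b]] j = nth false [:: a, b & r] (j %% n).
  by move=> j hj; rewrite -(@nthy n [:: a, b & r] j hn hs hj).
by rewrite !E //; lia.
Qed.

Section Count.
Variable n : nat.
Hypothesis hn : 2 < n.

Definition good (x : {ffun 'I_n -> bool}) (v : 'I_n) (j : 'I_(#|'I_n|.+1)) : bool :=
  (1 <= j <= 3) && ((j <= x (pred hn v) + x v + x (succ hn v)) == x v).

Lemma Fix_mem s : (s \in Fix_up (@cycle_rel n)) =
  [forall v, good [ffun u => xs s u] v (s v).2].
Proof.
rewrite inE /admissible /is_fixed.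
apply/andP/forallP => [[/forallP ha /forallP hf] v | H].
  move: (ha v) (hf v); rewrite /good !ffunE /fup_x /fup_k (sigma_cyc hn) (deg_cyc hn) /ks.
  move=> /andP[h1 h2] /andP[/eqP h3 _].
  by rewrite h1 h2 h3 eqxx.
split; apply/forallP => v; move: (H v); rewrite /good !ffunE /fup_x /fup_k ?(sigma_cyc hn) ?(deg_cyc hn) /ks;
  move=> /andP[/andP[h1 h2] /eqP h3].
  by rewrite h1 h2.
by rewrite h3 eqxx /=; case: (xs s v).
Qed.

Definition hst (p : {ffun 'I_n -> bool} * {ffun 'I_n -> 'I_(#|'I_n|.+1)}) : state 'I_n :=
  [ffun v => (p.1 v, p.2 v)].
Definition gst (s : state 'I_n) : {ffun 'I_n -> bool} * {ffun 'I_n -> 'I_(#|'I_n|.+1)} :=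
  ([ffun v => (s v).1], [ffun v => (s v).2]).

Lemma hst_bij : bijective hst.
Proof.
exists gst.
  case=> x k; rewrite /gst /hst; congr pair; apply/ffunP => v; by rewrite !ffunE.
by move=> s; apply/ffunP => v; rewrite !ffunE /=; case: (s v).
Qed.

Lemma card_Fix : #|Fix_up (@cycle_rel n)| =
  \sum_(x : {ffun 'I_n -> bool}) \prod_(v : 'I_n) w (x (pred hn v)) (x v) (x (succ hn v)).
Proof.
rewrite -sum1_card big_mkcond /=.
rewrite (reindex hst); last by apply: onW_bij; exact: hst_bij.
rewrite -(pair_bigA _ (fun x k => if hst (x, k) \in Fix_up (@cycle_rel n) then 1 else 0)) /=.
apply: eq_bigr => x _.
have Hk : forall k, (if hst (x, k) \in Fix_up (@cycle_rel n) then 1 else 0) =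
   \prod_(v : 'I_n) (good x v (k v) : nat).
  move=> k; rewrite Fix_mem.
  have -> : [ffun u => xs (hst (x, k)) u] = x by apply/ffunP => u; rewrite /xs !ffunE.
  case: forallP => H.
    rewrite big1 // => v _; have := H v; rewrite /hst ffunE /= => ->.
    by [].
  have [v hv] : exists v, ~~ good x v (k v).
    apply/existsP; rewrite -negb_forall; apply/forallP => H'; apply: H => v.
    by have := H' v; rewrite /hst ffunE.
  by rewrite (bigD1 v) //= (negbTE hv).
rewrite (eq_bigr _ (fun k _ => Hk k)).
rewrite -(bigA_distr_bigA (fun v j => (good x v j : nat))).
apply: eq_bigr => v _; rewrite /good; apply: count_j.
by rewrite card_ord; lia.
Qed.

Lemma prod_cyc (x : {ffun 'I_n -> bool}) :
  \prod_(v : 'I_n) w (x (pred hn v)) (x v) (x (succ hn v)) = cyc (fgraph x).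
Proof.
rewrite (reindex_inj (@succ_inj n hn)) /=.
have hs : size (fgraph x) = n by rewrite size_tuple card_ord.
rewrite (cyc_prod hn hs); apply: eq_bigr => v _; rewrite pred_succ.
rewrite -[x v](nth_fgraph_ord false) -[x (succ hn v)](nth_fgraph_ord false).
rewrite -[x (succ hn (succ hn v))](nth_fgraph_ord false) /=.
by rewrite (modn_small (ltn_ord v)) -[(v.+1 %% n).+1]addn1 modnDml addn1.
Qed.

Lemma sum_fgraph (G : seq bool -> nat) :
  \sum_(x : {ffun 'I_n -> bool}) G (fgraph x) = \sum_(l <- allb n) G l.
Proof.
rewrite -(big_map (fun x : {ffun 'I_n -> bool} => (fgraph x : seq bool)) xpredT G).
apply: perm_big; apply: uniq_perm.
- rewrite map_inj_uniq ?index_enum_uniq //.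
  by move=> x y /val_inj; apply: (can_inj (@fgraphK _ _)).
- exact: uniq_allb.
move=> l; rewrite mem_allb; apply/mapP/idP => [[x _ ->]|hl].
  by rewrite size_tuple card_ord.
have hl' : size l == #|'I_n| by rewrite card_ord.
exists (Finfun (Tuple hl')); first exact: mem_index_enum.
by rewrite FinfunK.
Qed.
End Count.

Lemma qf_rec m a b c d :
  qf m.+4 a b c d + 8 * qf m.+2 a b c d =
  6 * qf m.+3 a b c d + 2 * qf m.+1 a b c d + qf m a b c d.
Proof. by case: a; case: b; rewrite /= ?mul1n ?muln1 ?mul0n; lia. Qed.

Lemma T_rec m : T m.+4 + 8 * T m.+2 = 6 * T m.+3 + 2 * T m.+1 + T m.
Proof.
rewrite /T; have := qf_rec m false false false false; have := qf_rec m false true false true.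
have := qf_rec m true false true false; have := qf_rec m true true true true. lia.
Qed.

Lemma L2 m : lucas m.+2 = lucas m.+1 + lucas m. Proof. by []. Qed.
Lemma L6 m : lucas m.+4.+2 = 4 * lucas m.+3 + lucas m.
Proof. rewrite !L2; lia. Qed.

Lemma Lq k : lucas (3 * k.+2) = 4 * lucas (3 * k.+1) + lucas (3 * k).
Proof.
have -> : 3 * k.+2 = (3 * k).+4.+2 by lia.
have -> : 3 * k.+1 = (3 * k).+3 by lia.
exact: L6.
Qed.

Lemma T_luc m : T m = 2 + lucas (3 * m.+2).
Proof.
elim: m {-2}m (leqnn m) => [|k IH] m hm.
  by rewrite leqn0 in hm; move/eqP: hm => ->; vm_compute.
case: m hm => [|[|[|[|m]]]] hm; try (vm_compute; reflexivity).
have h4 := T_rec m.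
have e1 := IH m ltac:(lia). have e2 := IH m.+1 ltac:(lia).
have e3 := IH m.+2 ltac:(lia). have e4 := IH m.+3 ltac:(lia).
have := Lq m.+2; have := Lq m.+3; have := Lq m.+4; have := Lq m.+4.+1.
lia.
Qed.

Lemma card_main (n : nat) (hn : (3 <= n)%N) :
  #|Fix_up (@cycle_rel n)| = (2 + lucas (3 * n))%N.
Proof.
have hn' : (2 < n)%N by [].
rewrite (card_Fix hn') (eq_bigr _ (fun x _ => @prod_cyc n hn' x)) (@sum_fgraph n cyc).
have [m ->] : exists m, n = m.+2 by exists n.-2; lia.
by rewrite sum_cyc T_luc.
Qed.

Unset Implicit Arguments.
Local Open Scope ring_scope.

Lemma luc_real (R : rcfType) n :
  ((lucas (3 * n))%:R : R) = (2 + Num.sqrt 5) ^+ n + (2 - Num.sqrt 5) ^+ n.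
Proof.
set s := Num.sqrt (5 : R).
have s2 : s ^+ 2 = 5 by rewrite /s sqr_sqrtr // ler0n.
have hp : (2 + s) ^+ 2 = 4 * (2 + s) + 1.
  by rewrite sqrrD s2; ring.
have hm : (2 - s) ^+ 2 = 4 * (2 - s) + 1.
  by rewrite sqrrB s2; ring.
elim: n {-2}n (leqnn n) => [|k IH] n hn.
  by rewrite leqn0 in hn; move/eqP: hn => ->; rewrite !expr0.
case: n hn => [|[|n]] hn.
- by rewrite !expr0.
- by rewrite !expr1 /=; ring.
rewrite Lq natrD natrM IH ?IH //; try lia.
have E : forall x : R, x ^+ n.+2 = x ^+ 2 * x ^+ n.
  by move=> x; rewrite -exprD add2n.
rewrite !E hp hm !exprS; ring.
Qed.

Theorem proposition4p4 (n : nat) (hn : (3 <= n)%N) :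
  #|Fix_up (@cycle_rel n)| = (2 + lucas (3 * n))%N /\
  (forall R : rcfType,
     (#|Fix_up (@cycle_rel n)|%:R : R) =
       2 + (2 + Num.sqrt 5) ^+ n + (2 - Num.sqrt 5) ^+ n).
Proof.
split; first exact: card_main.
move=> R; rewrite card_main // natrD luc_real addrA.
done.
Qed.
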